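(* Let $G=(V,E)$ be a finite simple undirected graph, consider a run of \textsc{1-2-MinGreedy} on $G$ producing $M$, and let $M^*$ be a maximum matching such that each component of $(V,M\cup M^* )$ with an edge is an edge of $M\cap M^*$ or an $M$-$M^*$-path. Then (a) each endpoint of an $M$-$M^*$-path is the target of at most three transfers; and (b) an endpoint $w$ is the target of exactly three transfers if and only if there is a step in which the current degree of $w$ drops from $3$ to $1$ through the removal of two incident $F$-edges, and a later step in which the current degree of $w$ drops from $1$ to $0$ through the removal of its last incident $F$-edge.
   Context: \textsc{1-2-MinGreedy}: starting with $M=\emptyset$ and until no edges remain in the current graph, if every node has current degree at least $3$ select an arbitrary edge $\{u,v\}$, otherwise select an arbitrary node $u$ of minimum non-zero current degree and an arbitrary neighbor $v$; add $\{u,v\}$ to $M$ and remove all edges incident with $u$ or $v$. An $M$-$M^*$-path is a component of $(V,M\cup M^* )$ that is an alternating path starting and ending with an $M^*$-edge, with $m\geq1$ edges of $M$ and $m+1$ edges of $M^*$; its endpoints are its two $M$-uncovered end nodes. $F=E\setminus(M\cup M^* )$. For an endpoint $w$, an edge $\{v,w\}\in F$ is a transfer from $v$ to $w$ if, in the step of the algorithm in which $v$ is matched, the current degree of $w$ drops to at most $1$. *)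

(* Defs.v *)
(* A run of 1-2-MinGreedy is the sequence s of selected ordered pairs (u,v);
   in a min-degree step, u is the node of minimum non-zero degree. *)
From mathcomp Require Import all_boot.
Set Implicit Arguments. Unset Strict Implicit. Unset Printing Implicit Defensive.

Section Defs.
Variables (T : finType) (e : rel T).

Definition edges : {set {set T}} :=
  [set f : {set T} | [exists x, exists y, e x y && (f == [set x; y])]].

Definition matched (s : seq (T * T)) (i : nat) : {set T} :=
  [set x | has (fun p : T * T => (p.1 == x) || (p.2 == x)) (take i s)].

(* current graph before step i (after i steps): edges of E not incident
   to any node matched so far *)
Definition curE (s : seq (T * T)) (i : nat) (x y : T) : bool :=
  [&& e x y, x \notin matched s i & y \notin matched s i].

Definition deg (s : seq (T * T)) (i : nat) (x : T) : nat :=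
  #|[set y | curE s i x y]|.

Definition valid_step (s : seq (T * T)) (i : nat) (u v : T) : Prop :=
  curE s i u v /\
  ((forall x, deg s i x = 0 \/ 3 <= deg s i x) \/
   (0 < deg s i u /\ forall x, 0 < deg s i x -> deg s i u <= deg s i x)).

Definition greedy_run (s : seq (T * T)) : Prop :=
  (forall i u v, onth s i = Some (u, v) -> valid_step s i u v) /\
  (forall x y, ~~ curE s (size s) x y).

Definition M_of (s : seq (T * T)) : {set {set T}} :=
  [set [set fst p; snd p] | p in s].

Definition is_matching (N : {set {set T}}) : Prop :=
  (forall f, f \in N -> exists x y, e x y /\ f = [set x; y]) /\
  (forall f g, f \in N -> g \in N -> f != g -> [disjoint f & g]).

Definition maximum_matching (N : {set {set T}}) : Prop :=
  is_matching N /\ forall N', is_matching N' -> #|N'| <= #|N|.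

Definition covered (N : {set {set T}}) (x : T) : bool :=
  [exists f in N, x \in f].

Definition hrel (M Ms : {set {set T}}) : rel T :=
  fun x y => [set x; y] \in M :|: Ms.

Definition component (M Ms : {set {set T}}) (x : T) : {set T} :=
  [set y | connect (hrel M Ms) x y].

(* x :: q is an M-M*-path: alternating path starting and ending with an
   M*-edge, m >= 1 edges of M and m+1 edges of M*, M-uncovered endpoints,
   and it forms a whole component of (V, M \cup M* ). *)
Definition MMpath (M Ms : {set {set T}}) (x : T) (q : seq T) : Prop :=
  let p := x :: q in
  [/\ odd (size q), 3 <= size q, uniq p &
      forall i, i < size q ->
        [set nth x p i; nth x p i.+1] \in (if odd i then M else Ms)] /\
  [/\ ~~ covered M x, ~~ covered M (last x q)
    & [set y in p] = component M Ms x].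

Definition components_ok (M Ms : {set {set T}}) : Prop :=
  forall x, covered (M :|: Ms) x ->
    (exists a b, [set a; b] \in M :&: Ms /\ component M Ms x = [set a; b]) \/
    (exists y q, MMpath M Ms y q /\ component M Ms x = [set z in y :: q]).

Definition endpoint (M Ms : {set {set T}}) (w : T) : Prop :=
  exists x q, MMpath M Ms x q /\ (w = x \/ w = last x q).

Definition Fedges (M Ms : {set {set T}}) : {set {set T}} :=
  edges :\: (M :|: Ms).

Definition matched_at (s : seq (T * T)) (i : nat) (v : T) : bool :=
  [exists u, (onth s i == Some (u, v)) || (onth s i == Some (v, u))].

Definition transfer (s : seq (T * T)) (Ms : {set {set T}}) (v w : T) : bool :=
  ([set v; w] \in Fedges (M_of s) Ms) &&
  [exists i : 'I_(size s),
     [&& matched_at s i v, deg s i.+1 w <= 1 & deg s i.+1 w < deg s i w]].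

Definition ntransfers (s : seq (T * T)) (Ms : {set {set T}}) (w : T) : nat :=
  #|[set v | transfer s Ms v w]|.

Definition removed_F (s : seq (T * T)) (Ms : {set {set T}}) (i : nat) (w : T)
  : Prop :=
  forall x, curE s i w x -> ~~ curE s i.+1 w x ->
    [set w; x] \in Fedges (M_of s) Ms.

End Defs.

(* Main.v *)
Require Import Defs.
From mathcomp Require Import all_boot zify.
Set Implicit Arguments. Unset Strict Implicit. Unset Printing Implicit Defensive.

Section L.
Variables (T : finType) (e : rel T) (s : seq (T * T)).

Lemma matched_mono i j x : i <= j -> x \in matched s i -> x \in matched s j.
Proof.
move=> hij; rewrite !inE -(take_takel s hij).
move/hasP=> [y /mem_take Hy Py]; apply/hasP; by exists y.
Qed.

Lemma onth_size i p : onth s i = Some p -> i < size s.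
Proof. by move=> h; have := onthTE s i; rewrite h. Qed.

Lemma matched_step i p x : onth s i = Some p ->
  (x \in matched s i.+1) = [|| x == p.1, x == p.2 | x \in matched s i].
Proof.
move=> h; have hi := onth_size h.
rewrite !inE (take_nth p hi) (@onth_nth _ p p s i h) has_rcons /=.
by rewrite ![_ == x]eq_sym orbA.
Qed.

Lemma curE_mono i j x y : i <= j -> curE e s j x y -> curE e s i x y.
Proof.
move=> hij /and3P [h1 h2 h3]; apply/and3P; split => //.
  by apply: contra h2; apply: matched_mono.
by apply: contra h3; apply: matched_mono.
Qed.

Definition N w i := [set y | curE e s i w y].

Lemma N_mono w i j : i <= j -> N w j \subset N w i.
Proof. by move=> hij; apply/subsetP => y; rewrite !inE; apply: curE_mono. Qed.

Lemma degN w i : deg e s i w = #|N w i|.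
Proof. by []. Qed.

Hypothesis Hval : forall i u v, onth s i = Some (u, v) -> curE e s i u v.

Section W.
Variable w : T.
Hypothesis Hw : forall i, w \notin matched s i.

Lemma D_sub i u v x : onth s i = Some (u, v) ->
  x \in N w i :\: N w i.+1 -> (x == u) || (x == v).
Proof.
move=> h; rewrite !inE => /andP [H2 H1].
move: H1 H2; rewrite /curE => /and3P [e1 w1 x1].
rewrite e1 (Hw i.+1) /= (matched_step _ h) /= (negbTE x1) orbF => /negbNE.
by [].
Qed.

Lemma onth_some i : i < size s -> exists u v, onth s i = Some (u, v).
Proof.
move=> hi; case E: (onth s i) => [[u v]|]; first by exists u, v.
by have := onthTE s i; rewrite E hi.
Qed.

Lemma D_card i : i < size s -> #|N w i :\: N w i.+1| <= 2.
Proof.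
move=> /onth_some [u [v h]].
apply: (@leq_trans #|[set u; v]|); last by rewrite cards2; case: (u != v).
apply: subset_leq_card; apply/subsetP => x /(D_sub h); by rewrite !inE.
Qed.

Lemma matched_at_in i v : matched_at s i v ->
  exists u, onth s i = Some (u, v) \/ onth s i = Some (v, u).
Proof. by move/existsP => [u /orP [] /eqP h]; exists u; [left|right]. Qed.

Lemma in_D i v : matched_at s i v -> e w v -> v \in N w i :\: N w i.+1.
Proof.
move=> /matched_at_in [u H] ewv.
have [p [h [vp vi]]] : exists p, onth s i = Some p /\ ((v == p.1) || (v == p.2)) /\ v \notin matched s i.
  case: H => h; [exists (u, v) | exists (v, u)]; split => //; have := Hval h;
    case/and3P => _ ? ?; by rewrite eqxx ?orbT.
rewrite !inE /curE ewv (Hw i) (Hw i.+1) vi /=.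
by rewrite andbT negbK (matched_step _ h) orbA vp.
Qed.

Lemma out_D i x : i < size s -> x \in N w i :\: N w i.+1 -> matched_at s i x.
Proof.
move=> /onth_some [u [v h]] /(D_sub h) /orP [] /eqP ->; apply/existsP.
  by exists v; rewrite h eqxx orbT.
by exists u; rewrite h eqxx.
Qed.

End W.
Section Main.
Variable w : T.
Hypothesis Hw : forall i, w \notin matched s i.
Variable Ms : {set {set T}}.
Hypotheses (Hsym : symmetric e) (Hirr : irreflexive e).

Lemma Fedge_e v : [set v; w] \in Fedges e (M_of s) Ms -> e w v.
Proof.
rewrite inE => /andP [_]; rewrite inE => /existsP [x /existsP [y /andP [exy /eqP E]]].
have hv : (v == x) || (v == y) by rewrite -in_set2 -E set21.
have hw : (w == x) || (w == y) by rewrite -in_set2 -E set22.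
have hy : (y == v) || (y == w) by rewrite -in_set2 E set22.
have hx : (x == v) || (x == w) by rewrite -in_set2 E set21.
move: hv hw hx hy => /orP [] /eqP ? /orP [] /eqP ?; subst => // _ /orP [] /eqP ?; subst;
  first [by rewrite Hirr in exy | by rewrite Hsym | by [] | (move/setP/(_ x): E; rewrite !inE eqxx /= ?orbb => /eqP ?; subst; by rewrite Hirr in exy)].
Qed.

Definition S := [set v | transfer e s Ms v w].
Definition D i := N w i :\: N w i.+1.

Lemma tr_in v : v \in S -> exists i, [/\ i < size s, v \in D i,
  deg e s i.+1 w <= 1 & deg e s i.+1 w < deg e s i w].
Proof.
rewrite inE => /andP [hF /existsP [i /and3P [hm h1 h2]]].
exists i; split => //; apply: in_D => //; exact: Fedge_e.
Qed.

Lemma tr_out i x : i < size s -> x \in D i -> [set w; x] \in Fedges e (M_of s) Ms ->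
  deg e s i.+1 w <= 1 -> deg e s i.+1 w < deg e s i w -> x \in S.
Proof.
move=> hi hx hF h1 h2; rewrite inE /transfer setUC hF /=.
apply/existsP; exists (Ordinal hi); rewrite /= h1 h2 andbT.
by rewrite (out_D Hw hi hx).
Qed.

Lemma cardD i : #|D i| = deg e s i w - deg e s i.+1 w.
Proof.
by rewrite /D cardsD !degN (setIidPr (N_mono w (leqnSn i))).
Qed.

Lemma struct_S : S != set0 -> exists i0, [/\ i0 < size s, deg e s i0.+1 w <= 1,
  deg e s i0.+1 w < deg e s i0 w & S \subset D i0 :|: N w i0.+1].
Proof.
case/set0Pn => v0 /tr_in [i1 [hi1 _ h11 h12]].
pose P n := [&& n < size s, deg e s n.+1 w <= 1 & deg e s n.+1 w < deg e s n w].
have exP : exists n, P n by exists i1; rewrite /P hi1 h11 h12.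
case: (ex_minnP exP) => i0 /and3P [hi0 h01 h02] hmin.
exists i0; split => //; apply/subsetP => v /tr_in [i [hi hv h1 h2]].
have : i0 <= i by apply: hmin; rewrite /P hi h1 h2.
rewrite leq_eqVlt => /orP [/eqP eqi|hlt]; first by rewrite inE eqi hv.
rewrite inE; apply/orP; right.
move: hv; rewrite inE => /andP [_ hv]; exact: (subsetP (N_mono w hlt)).
Qed.

Lemma partA : #|S| <= 3.
Proof.
case: (eqVneq S set0) => [->|/struct_S [i0 [hi0 h1 h2 hsub]]]; first by rewrite cards0.
apply: (leq_trans (subset_leq_card hsub)).
rewrite cardsU; have := D_card Hw hi0; rewrite -/(D i0) -degN => hD.
have := leq_subr #|D i0 :&: N w i0.+1| (#|D i0| + deg e s i0.+1 w). lia.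
Qed.

Lemma D_sub_N i : D i \subset N w i.
Proof. by apply/subsetP => x; rewrite inE => /andP []. Qed.

Lemma partB_fwd : #|S| = 3 -> exists i j, [/\ i < j, j < size s,
        [/\ deg e s i w = 3, deg e s i.+1 w = 1 & removed_F e s Ms i w] &
        [/\ deg e s j w = 1, deg e s j.+1 w = 0 & removed_F e s Ms j w]].
Proof.
move=> h3.
have : S != set0 by rewrite -card_gt0 h3.
case/struct_S => i0 [hi0 h1 h2 hsub].
have hD := D_card Hw hi0; rewrite -/(D i0) in hD; have hcD := cardD i0.
have hdisj : D i0 :&: N w i0.+1 = set0.
  by apply/setP => x; rewrite !inE; case: (curE e s i0.+1 w x); rewrite ?andbF.
have hU := cardsU (D i0) (N w i0.+1); rewrite hdisj cards0 subn0 -degN in hU.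
have hle := subset_leq_card hsub.
have hN1 : deg e s i0.+1 w = 1 by lia.
have hN0 : deg e s i0 w = 3 by lia.
have hSeq : S =i D i0 :|: N w i0.+1 by apply/subset_cardP => //; lia.
have hDS : forall x, x \in D i0 -> x \in S by move=> x hx; rewrite hSeq inE hx.
have hNS : forall x, x \in N w i0.+1 -> x \in S by move=> x hx; rewrite hSeq inE hx orbT.
have trF : forall x, x \in S -> [set w; x] \in Fedges e (M_of s) Ms.
  by move=> x; rewrite inE setUC => /andP [].
have : #|N w i0.+1| == 1 by rewrite -degN hN1.
case/cards1P => y Ey.
have yS : y \in S by apply: hNS; rewrite Ey set11.
case: (tr_in yS) => j [hj hyj _ _].
have hij : i0 < j.
  rewrite ltnNge; apply/negP => hji.
  have hji1 : j.+1 <= i0.+1 by []. have := subsetP (N_mono w hji1) y; rewrite Ey set11 => /(_ isT).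
  by move: hyj; rewrite inE => /andP [/negP].
have hNj : N w j \subset [set y] by rewrite -Ey; apply: N_mono.
exists i0, j; split => //.
  split => // x c1 c2; apply: trF; apply: hDS; by rewrite inE !inE c1 c2.
split.
- rewrite degN; apply/eqP; rewrite eqn_leq; apply/andP; split.
    by rewrite -(cards1 y); apply: subset_leq_card.
  by rewrite card_gt0; apply/set0Pn; exists y; apply: (subsetP (D_sub_N j)).
- apply/eqP; rewrite degN cards_eq0; apply/eqP/setP => x; rewrite inE in_set0.
  apply/negP => hx.
  have := subsetP hNj x (subsetP (N_mono w (leqnSn j)) x ltac:(by rewrite inE)); rewrite inE => /eqP ex.
  by move: hyj hx; rewrite ex inE => /andP [/negP hn _] hx; apply: hn; rewrite inE.
- move=> x c1 c2; apply: trF.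
  have hxN : x \in N w j by rewrite /N inE. have := subsetP hNj x hxN; rewrite inE => /eqP ->; exact: yS.
Qed.

Lemma D_in_S i : i < size s -> deg e s i.+1 w <= 1 -> deg e s i.+1 w < deg e s i w ->
  removed_F e s Ms i w -> D i \subset S.
Proof.
move=> hi h1 h2 hr; apply/subsetP => x hx; apply: (tr_out hi hx) => //.
apply: (hr x); move: hx; rewrite /D /N !inE; case/andP => //.
Qed.

Lemma partB_bwd : (exists i j, [/\ i < j, j < size s,
        [/\ deg e s i w = 3, deg e s i.+1 w = 1 & removed_F e s Ms i w] &
        [/\ deg e s j w = 1, deg e s j.+1 w = 0 & removed_F e s Ms j w]]) -> #|S| = 3.
Proof.
case=> i [j [hij hj [a1 a2 a3] [b1 b2 b3]]].
have hi : i < size s by apply: ltn_trans hj.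
have Si := D_in_S hi ltac:(by rewrite a2) ltac:(by rewrite a2 a1) a3.
have Sj := D_in_S hj ltac:(by rewrite b2) ltac:(by rewrite b2 b1) b3.
have ci := cardD i; have cj := cardD j.
have hdisj : D i :&: D j = set0.
  apply/setP => x; rewrite in_set0; apply/negP; rewrite inE => /andP [xi xj].
  have := subsetP (N_mono w hij) x (subsetP (D_sub_N j) x xj).
  by move: xi; rewrite inE => /andP [/negP].
have hU := cardsU (D i) (D j); rewrite hdisj cards0 subn0 in hU.
have : #|D i :|: D j| <= #|S| by apply: subset_leq_card; rewrite subUset Si Sj.
have := partA. lia.
Qed.
End Main.

Lemma endpoint_unmatched Ms w : endpoint (M_of s) Ms w -> forall i, w \notin matched s i.
Proof.
case=> x [q [[_ [ncx ncl _]] hw]] i.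
have nc : ~~ covered (M_of s) w by case: hw => ->.
apply/negP => hm; move/negP: nc; apply; move: hm; rewrite inE.
move/hasP => [p /mem_take ps hp]; apply/existsP; exists [set p.1; p.2].
rewrite (imset_f (fun p : T * T => [set p.1; p.2]) ps) /= !inE.
by move/orP: hp => [] /eqP ->; rewrite eqxx ?orbT.
Qed.
End L.

Theorem lemma8 (T : finType) (e : rel T) (s : seq (T * T))
    (Ms : {set {set T}}) :
  symmetric e -> irreflexive e ->
  greedy_run e s ->
  maximum_matching e Ms ->
  components_ok (M_of s) Ms ->
  (forall w, endpoint (M_of s) Ms w -> ntransfers e s Ms w <= 3) /\
  (forall w, endpoint (M_of s) Ms w ->
     (ntransfers e s Ms w = 3 <->
      exists i j, [/\ i < j, j < size s,
        [/\ deg e s i w = 3, deg e s i.+1 w = 1 & removed_F e s Ms i w] &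
        [/\ deg e s j w = 1, deg e s j.+1 w = 0 & removed_F e s Ms j w]])).
Proof.
move=> Hsym Hirr [Hv _] _ _.
have Hval : forall i u v, onth s i = Some (u, v) -> curE e s i u v.
  by move=> i u v /Hv [].
split=> w /endpoint_unmatched Hw.
  exact: (partA Hval (Hw) Ms Hsym Hirr).
split; [exact: (partB_fwd Hval Hw Hsym Hirr) | exact: (partB_bwd Hval Hw Hsym Hirr)].
Qed.
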